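(* For every edge-colored hypergraph $H=(V,E,C,\ell)$ with weights $w_e \ge 0$, the optimal value of the node-weighted multiway cut LP relaxation on the reduced graph $G(H)$ is at most the optimal value of the \textsc{MinECC} LP relaxation on $H$. Moreover, the inequality can be strict: for $C=\{1,2,3\}$ and $H$ the star graph with center $v_0$, leaves $v_1,v_2,v_3$ and unit-weight edges $e_i=\{v_0,v_i\}$ of color $i$ ($i=1,2,3$), the \textsc{MinECC} LP relaxation has optimal value $2$ while the node-weighted multiway cut LP relaxation on $G(H)$ has optimal value $\frac32$.
   Context: An edge-colored hypergraph is $H=(V,E,C,\ell)$ with finite node set $V$, a multiset $E$ of nonempty subsets of $V$ (edges), a color set $C=[k]$, a map $\ell\colon E\to C$, and weights $w_e\ge 0$. The \textsc{MinECC} LP relaxation has variables $x_v^i$ ($v\in V,i\in C$), $x_e$ ($e\in E$) and is: minimize $\sum_{e} w_e x_e$ subject to $\sum_{i=1}^k x_v^i = k-1$ for all $v$; $x_e\ge x_v^{\ell(e)}$ for all $e$ and $v\in e$; $0\le x_v^i\le 1$; $0\le x_e\le 1$. The reduced graph $G(H)=(\hat V,\hat E)$ has node set $\hat V = T\cup V\cup V_E$, where $T=\{t_1,\dots,t_k\}$ are terminal nodes (one per color) and $V_E=\{v_e: e\in E\}$ has one node per edge of $H$; its edge set consists of $(v,v_e)$ for every $e\in E$ and $v\in e$, and $(t_{\ell(e)},v_e)$ for every $e\in E$. Nodes $v_e$ have weight $w_e$; nodes in $V\cup T$ have infinite weight. The node-weighted multiway cut LP relaxation on $G(H)$ has variables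 $d_u\ge 0$ for $u\in\hat V$ and $y_u^i$ for $u\in \hat V$, $i\in[k]$, with $d_u=0$ for all $u\in V\cup T$ (infinite-weight nodes), and is: minimize $\sum_{e\in E} w_e d_{v_e}$ subject to $y_b^i \le y_a^i + d_b$ and $y_a^i\le y_b^i + d_a$ for every edge $(a,b)\in\hat E$ and every $i\in[k]$; $y_{t_i}^i=0$ for all $i$; $y_{t_i}^j\ge 1$ for all $i\neq j$. (Equivalently: minimize $\sum_e w_e d_{v_e}$ subject to $d\ge 0$, $d=0$ on $V\cup T$, and $\sum_{u\in P} d_u\ge 1$ for every path $P$ in $G(H)$ between two distinct terminals.) *)

(* Defs.v *)
From HB Require Import structures.
From mathcomp Require Import all_boot all_order all_algebra.
From mathcomp Require Import classical_sets reals constructive_ereal ereal.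
Set Implicit Arguments. Unset Strict Implicit. Unset Printing Implicit Defensive.
Import Order.TTheory GRing.Theory Num.Theory.
Local Open Scope ring_scope.
Local Open Scope classical_set_scope.

(* An edge-colored hypergraph H = (V, E, C, l) with C = [k] (colors 'I_k,
   0-indexed), node set V : finType, the multiset of edges indexed by a
   finite type Eidx with edge : Eidx -> {set V} (each nonempty),
   color : Eidx -> 'I_k, and weights w : Eidx -> R. *)

Section LPs.
Variables (R : realType) (V Eidx : finType) (k : nat).
Variables (edge : Eidx -> {set V}) (color : Eidx -> 'I_k) (w : Eidx -> R).

Definition minecc_feasible (x : V -> 'I_k -> R) (xe : Eidx -> R) : Prop :=
  [/\ (forall v, \sum_(i < k) x v i = k.-1%:R),
      (forall e v, v \in edge e -> x v (color e) <= xe e),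
      (forall v i, 0 <= x v i /\ x v i <= 1) &
      (forall e, 0 <= xe e /\ xe e <= 1)].

Definition minecc_obj (xe : Eidx -> R) : R := \sum_(e : Eidx) w e * xe e.

(* optimal value (infimum, +oo if infeasible) *)
Definition minecc_opt : \bar R :=
  ereal_inf [set z : \bar R | exists x xe,
                minecc_feasible x xe /\ z = (minecc_obj xe)%:E].

(* node set  T + V + V_E : terminal t_i is inl (inl i), node v is inl (inr v),
   edge-node v_e is inr e. *)
Definition gnode : finType := (('I_k + V) + Eidx)%type.
Definition term (i : 'I_k) : gnode := inl (inl i).
Definition vnode (v : V) : gnode := inl (inr v).
Definition enode (e : Eidx) : gnode := inr e.

Definition gedge (a b : gnode) : Prop :=
  (exists e v, v \in edge e /\ a = vnode v /\ b = enode e) \/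
  (exists e, a = term (color e) /\ b = enode e).

Definition nwmc_feasible (d : gnode -> R) (y : gnode -> 'I_k -> R) : Prop :=
  (forall u, 0 <= d u) /\
  (forall v, d (vnode v) = 0) /\
  (forall i, d (term i) = 0) /\
  (forall a b, gedge a b -> forall i,
      y b i <= y a i + d b /\ y a i <= y b i + d a) /\
  (forall i, y (term i) i = 0) /\
  (forall i j, i != j -> 1 <= y (term i) j).

Definition nwmc_obj (d : gnode -> R) : R := \sum_(e : Eidx) w e * d (enode e).

Definition nwmc_opt : \bar R :=
  ereal_inf [set z : \bar R | exists d y,
                nwmc_feasible d y /\ z = (nwmc_obj d)%:E].
End LPs.

(* V = {v_0, v_1, v_2, v_3} = 'I_4 (v_0 = ord0), E = {e_1,e_2,e_3} = 'I_3,
   colors C = 'I_3, e_i = {v_0, v_{i}} of color i, unit weights. *)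
Definition star_edge (e : 'I_3) : {set 'I_4} := [set ord0; lift ord0 e].
Definition star_color (e : 'I_3) : 'I_3 := e.
Definition star_w (R : realType) (e : 'I_3) : R := 1.

(* Main.v *)
Require Import Defs.
From HB Require Import structures.
From mathcomp Require Import all_boot all_order all_algebra.
From mathcomp Require Import classical_sets reals constructive_ereal ereal lra.
Import Order.TTheory GRing.Theory Num.Theory.
Local Open Scope ring_scope.

Lemma sum2D1 (R : realType) k (f : 'I_k -> R) i c : i != c ->
  \sum_j f j = f i + f c + \sum_(j | (j != i) && (j != c)) f j.
Proof.
move=> ic; rewrite (bigD1 i) //= (bigD1 c) /=; last by rewrite eq_sym.
by rewrite addrA.
Qed.

Lemma pair_ge1 (R : realType) k (f : 'I_k -> R) i c : i != c ->
  (forall j, 0 <= f j <= 1) -> \sum_j f j = k.-1%:R -> 1 <= f i + f c.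
Proof.
move=> ic hf hs.
have h1 := @sum2D1 R k (fun _ => (1:R)) i c ic.
have h2 := @sum2D1 R k f i c ic.
have hle : \sum_(j | (j != i) && (j != c)) f j <= \sum_(j | (j != i) && (j != c)) (1:R).
  by apply: ler_sum => j _; case/andP: (hf j).
have hk : (0 < k)%N by apply: leq_ltn_trans (ltn_ord i).
rewrite sumr_const card_ord in h1.
have hk1 : k%:R = k.-1%:R + 1 :> R by rewrite natr1 prednK.
have h1' : (k%:R : R) = 1 + 1 + \sum_(j | (j != i) && (j != c)) (1:R) by exact: h1.
rewrite hs in h2; lra.
Qed.

Lemma part1 (R : realType) (V Eidx : finType) (k : nat)
  (edge : Eidx -> {set V}) (color : Eidx -> 'I_k) (w : Eidx -> R) :
  (nwmc_opt edge color w <= minecc_opt edge color w)%E.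
Proof.
apply: ereal_inf_le_tmp => z [x [xe [[hs hc hx hxe] ->]]].
pose d (u : gnode V Eidx k) : R := match u with inr e => xe e | _ => 0 end.
pose y (u : gnode V Eidx k) (i : 'I_k) : R := match u with
  | inl (inl j) => if i == j then 0 else 1
  | inl (inr v) => x v i
  | inr e => if i == color e then xe e else 1 end.
exists d, y; split; last by [].
split; first by case=> [[|]|] //= e; case: (hxe e).
split; first by [].
split; first by [].
split.
  move=> a b [[e [v [hv [-> ->]]]] | [e [-> ->]]] i /=.
  - have [xi1 xi2] := hx v i; have [e1 e2] := hxe e; have hcv := hc e v hv.
    case: eqP => [->|/eqP ne].
      have [c1 c2] := hx v (color e); split; lra.
    have := @pair_ge1 R k (x v) i (color e) ne.
    move=> /(_ _ (hs v)) H.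
    have H' : 1 <= x v i + x v (color e).
      apply: H => j; have [a1 a2] := hx v j; by rewrite a1 a2.
    split; lra.
  - have [e1 e2] := hxe e.
    case: eqP => _; split; lra.
split; first by move=> i /=; rewrite eqxx.
by move=> i j ij /=; rewrite eq_sym (negbTE ij).
Qed.


Lemma star_minecc (R : realType) :
  minecc_opt star_edge star_color (@star_w R) = (2%:R)%:E.
Proof.
apply/le_anti/andP; split.
  apply: ereal_inf_lbound.
  exists (fun _ _ => 2/3 : R), (fun _ => 2/3 : R); split.
    split => //.
    - by move=> v; rewrite !big_ord_recr big_ord0 /=; lra.
    - by move=> v i; lra.
    - by move=> e; lra.
  by rewrite /minecc_obj /star_w !big_ord_recr big_ord0 /=; congr (_%:E); lra.
apply: le_ereal_inf_tmp => z [x [xe [[hs hc hx hxe] ->]]]; rewrite lee_fin.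
have : \sum_i x ord0 i <= \sum_e @star_w R e * xe e.
  apply: ler_sum => e _; rewrite /star_w mul1r; apply: (hc e ord0).
  by rewrite /star_edge !inE eqxx.
by rewrite hs /minecc_obj.
Qed.

Lemma star_pair (R : realType) (d : gnode 'I_4 'I_3 3 -> R) y
  (i j : 'I_3) : nwmc_feasible star_edge star_color d y -> i != j ->
  1 <= d (enode 'I_4 3 i) + d (enode 'I_4 3 j).
Proof.
move=> [hd [hv [ht [hE [hy0 hy1]]]]] ij.
have g1 : forall e : 'I_3, gedge star_edge star_color (term 'I_4 'I_3 e) (enode 'I_4 3 e).
  by move=> e; right; exists e.
have g2 : forall e : 'I_3, gedge star_edge star_color (vnode 'I_3 3 ord0) (enode 'I_4 3 e).
  by move=> e; left; exists e, ord0; rewrite /star_edge !inE eqxx.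
have [a1 _] := hE _ _ (g1 j) j.
have [_ a2] := hE _ _ (g2 j) j.
have [a3 _] := hE _ _ (g2 i) j.
have [_ a4] := hE _ _ (g1 i) j.
have := hy1 i j ij; have := hy0 j.
rewrite hv in a2; rewrite ht in a4.
rewrite /star_color in a1 a4.
move=> h0 h1; lra.
Qed.

Lemma star_nwmc (R : realType) :
  nwmc_opt star_edge star_color (@star_w R) = (3%:R / 2%:R)%:E.
Proof.
apply/le_anti/andP; split.
  apply: ereal_inf_lbound.
  pose d (u : gnode 'I_4 'I_3 3) : R := match u with inr _ => 1/2 | _ => 0 end.
  pose y (u : gnode 'I_4 'I_3 3) (i : 'I_3) : R := match u with
    | inl (inl j) => if i == j then 0 else 1
    | inl (inr v) => 1/2
    | inr e => if i == e then 1/2 else 1 end.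
  exists d, y; split.
    split; first by case=> [[|]|] //= e; lra.
    split; first by [].
    split; first by [].
    split.
      move=> a b [[e [v [hv [-> ->]]]] | [e [-> ->]]] i /=.
        by case: eqP => _; split; lra.
      by rewrite /star_color; case: eqP => _; split; lra.
    split; first by move=> i /=; rewrite eqxx.
    by move=> i j ij /=; rewrite eq_sym (negbTE ij).
  by rewrite /nwmc_obj /star_w !big_ord_recr big_ord0 /=; congr (_%:E); lra.
apply: le_ereal_inf_tmp => z [d [y [hf ->]]]; rewrite lee_fin.
rewrite /nwmc_obj /star_w !big_ord_recl big_ord0 /= !mul1r.
have h01 := @star_pair R d y ord0 (lift ord0 ord0) hf isT.
have h02 := @star_pair R d y ord0 (lift ord0 (lift ord0 ord0)) hf isT.
have h12 := @star_pair R d y (lift ord0 ord0) (lift ord0 (lift ord0 ord0)) hf isT.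
lra.
Qed.

Theorem theorem1 :
  (forall (R : realType) (V Eidx : finType) (k : nat)
          (edge : Eidx -> {set V}) (color : Eidx -> 'I_k) (w : Eidx -> R),
      (forall e, edge e != finset.set0) ->
      (forall e, 0 <= w e) ->
      (nwmc_opt edge color w <= minecc_opt edge color w)%E) /\
  (forall R : realType,
      minecc_opt star_edge star_color (@star_w R) = (2%:R)%:E /\
      nwmc_opt star_edge star_color (@star_w R) = (3%:R / 2%:R)%:E).
Proof.
split; first by move=> *; apply: part1.
by move=> R; split; [apply: star_minecc | apply: star_nwmc].
Qed.
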